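(* The decision problem Maximum Matching cannot be expressed by an ESO universal Horn sentence, even assuming that the input structures come with a successor relation.
   Context: Maximum Matching: given a finite undirected graph $G=(V,E)$ with no self-loops and at most one edge between any pair of vertices, together with a non-negative integer $K$ (part of the input, varying from instance to instance, with $K \le |V|$), decide whether there is a matching $F \subseteq E$ (a set of pairwise vertex-disjoint edges) with $|F| \ge K$. Instances are given as finite structures over an input vocabulary containing the edge relation, a representation of $K$, and a successor relation (the successor relation of a linear order on the universe). ESO universal Horn logic consists of sentences $\exists S_1 \cdots \exists S_m\, \forall \bar{x}\, \psi$, with $S_i$ second-order relation variables and $\psi$ a quantifier-free conjunction of clauses, each containing at most one positive occurrence of an atom built from the quantified relations $S_i$ (literals over the input vocabulary are unrestricted). A problem is expressed by such a sentence if an input structure is a yes-instance exactly when it satisfies the sentence. *)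

(* Defs.v *)
From mathcomp Require Import all_boot.
Set Implicit Arguments.
Unset Strict Implicit.
Unset Printing Implicit Defensive.

(* Input vocabulary: binary edge relation E, unary relation K representing
   the number K (as a set of exactly K elements, K = #|K|), and binary
   successor relation S. *)
Record instance (T : finType) := Instance {
  inE : rel T;
  inK : pred T;
  inS : rel T }.

Definition successor_of_linear_order (T : finType) (S : rel T) : Prop :=
  exists lt : rel T,
    irreflexive lt /\ transitive lt /\
    (forall x y, x != y -> lt x y || lt y x) /\
    (forall x y, S x y <-> (lt x y /\ ~ (exists z, lt x z /\ lt z y))).

Definition valid_instance (T : finType) (A : instance T) : Prop :=
  irreflexive (inE A) /\ symmetric (inE A) /\ successor_of_linear_order (inS A).

Definition is_matching (T : finType) (E : rel T) (F : {set {set T}}) : Prop :=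
  (forall e, e \in F -> exists u v, E u v /\ e = [set u; v]) /\
  (forall e1 e2, e1 \in F -> e2 \in F -> e1 != e2 -> [disjoint e1 & e2]).

Definition max_matching_yes (T : finType) (A : instance T) : Prop :=
  exists F : {set {set T}}, is_matching (inE A) F /\ #|inK A| <= #|F|.

(* m second-order relation variables S_0..S_{m-1} with arities ar i,
   nv first-order (universally quantified) variables x_0..x_{nv-1}. *)
Inductive atom (m : nat) (ar : 'I_m -> nat) (nv : nat) : Type :=
| AtE of 'I_nv & 'I_nv
| AtK of 'I_nv
| AtS of 'I_nv & 'I_nv
| AtEq of 'I_nv & 'I_nv
| AtSO (i : 'I_m) of (ar i).-tuple 'I_nv.

(* a literal: (true, a) is the atom a, (false, a) is its negation *)
Definition literal m (ar : 'I_m -> nat) nv := (bool * atom ar nv)%type.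

(* exists S_0..S_{m-1} forall x_0..x_{nv-1}, /\ of clauses (disjunctions
   of literals) *)
Record eso_sentence := ESOSentence {
  so_num : nat;
  so_arity : 'I_so_num -> nat;
  fo_num : nat;
  matrix : seq (seq (literal so_arity fo_num)) }.

Definition is_SO_atom m (ar : 'I_m -> nat) nv (a : atom ar nv) : bool :=
  if a is AtSO _ _ then true else false.

Definition horn_clause m (ar : 'I_m -> nat) nv (c : seq (literal ar nv)) : bool :=
  count (fun l : literal ar nv => l.1 && is_SO_atom l.2) c <= 1.

Definition universal_horn (phi : eso_sentence) : bool :=
  all (@horn_clause _ _ _) (matrix phi).

Definition atom_holds (T : finType) (A : instance T) m (ar : 'I_m -> nat) nv
    (Sint : forall i : 'I_m, pred ((ar i).-tuple T)) (v : 'I_nv -> T)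
    (a : atom ar nv) : bool :=
  match a with
  | AtE x y => inE A (v x) (v y)
  | AtK x => inK A (v x)
  | AtS x y => inS A (v x) (v y)
  | AtEq x y => v x == v y
  | AtSO i args => Sint i (map_tuple v args)
  end.

Definition literal_holds (T : finType) (A : instance T) m (ar : 'I_m -> nat) nv
    (Sint : forall i : 'I_m, pred ((ar i).-tuple T)) (v : 'I_nv -> T)
    (l : literal ar nv) : bool :=
  if l.1 then atom_holds A Sint v l.2 else ~~ atom_holds A Sint v l.2.

Definition satisfies (T : finType) (A : instance T) (phi : eso_sentence) : Prop :=
  exists Sint : forall i : 'I_(so_num phi), pred ((@so_arity phi i).-tuple T),
    forall v : 'I_(fo_num phi) -> T,
      all (fun c => has (literal_holds A Sint v) c) (matrix phi).

Definition expresses_max_matching (phi : eso_sentence) : Prop :=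
  forall (T : finType) (A : instance T),
    valid_instance A -> (max_matching_yes A <-> satisfies A phi).

(* Main.v *)
Require Import Defs.
From mathcomp Require Import all_boot.

Section Transfer.
Variables (T T' : finType) (A : instance T) (B : instance T') (f : T' -> T).
Hypothesis finj : injective f.
Hypothesis hE : forall a b, Defs.inE B a b = Defs.inE A (f a) (f b).
Hypothesis hK : forall a, inK B a = inK A (f a).
Hypothesis hS : forall a b, inS B a b = inS A (f a) (f b).

Lemma transfer phi : satisfies A phi -> satisfies B phi.
Proof.
case=> Sint H.
exists (fun i (t : (so_arity i).-tuple T') => Sint i (map_tuple f t)).
move=> v; have := H (fun x => f (v x)).
have Hat : forall a, atom_holds B (fun i (t : (so_arity i).-tuple T') => Sint i (map_tuple f t)) v a
                 = atom_holds A Sint (fun x => f (v x)) a.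
  case=> [x y|x|x y|x y|i args] /=.
  - by rewrite hE.
  - by rewrite hK.
  - by rewrite hS.
  - by rewrite (inj_eq finj).
  - suff -> : map_tuple f (map_tuple v args) = map_tuple (fun x => f (v x)) args by [].
    apply: val_inj => /=; by rewrite -map_comp.
have Hl : forall l, literal_holds B (fun i (t : (so_arity i).-tuple T') => Sint i (map_tuple f t)) v l
                 = literal_holds A Sint (fun x => f (v x)) l.
  by case=> [[] a]; rewrite /literal_holds /= Hat.
by rewrite (eq_all (fun c => eq_has Hl c)).
Qed.
End Transfer.

Definition Abool : instance bool :=
  Instance (fun x y : bool => x != y) (fun x : bool => x) (fun x y : bool => ~~ x && y).
Definition Bunit : instance unit :=
  Instance (fun _ _ : unit => false) (fun _ : unit => true) (fun _ _ : unit => false).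

Lemma validA : valid_instance Abool.
Proof.
split; first by case.
split; first by move=> x y /=; rewrite eq_sym.
exists (fun x y : bool => ~~ x && y).
split; first by case.
split; first by move=> [] [] [].
split; first by move=> [] [].
move=> x y /=; split.
- move=> h; split => //; case=> z []; move: h; by case: x; case: y; case: z.
- by case.
Qed.

Lemma validB : valid_instance Bunit.
Proof.
split; first by [].
split; first by [].
exists (fun _ _ : unit => false).
split; first by [].
split; first by [].
split; first by move=> [] [].
move=> x y /=; split => //; by case.
Qed.

Lemma yesA : max_matching_yes Abool.
Proof.
exists [set [set false; true]]; split; last first.
  rewrite cards1 (@eq_card1 _ true) //; by case.
split.
- move=> e; rewrite inE => /eqP ->; by exists false, true.
- move=> e1 e2; rewrite !inE => /eqP -> /eqP ->; by rewrite eqxx.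
Qed.

Lemma noB : ~ max_matching_yes Bunit.
Proof.
case=> F [[HF _]] Hc.
have F0 : F = set0.
  apply/setP => e; rewrite inE; apply/negbTE/negP => /HF [u [v [h _]]] //.
move: Hc; rewrite F0 cards0 (@eq_card1 _ tt) //; by case.
Qed.

Theorem lemma1 :
  ~ (exists phi : eso_sentence,
        universal_horn phi /\ expresses_max_matching phi).
Proof.
case=> phi [_ Hphi].
apply: noB; apply/(Hphi _ _ validB).
apply: (@transfer bool unit Abool Bunit (fun _ => true)).
- by move=> [] [].
- by move=> [] [].
- by [].
- by move=> [] [].
by apply/(Hphi _ _ validA); exact: yesA.
Qed.
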